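(* Let $P$ be a continuous poset with $p\not\ll p$ for all $p\in P$, and let $M$ be a persistence module over $P$. Then (i) $M$ is not lower semi-continuous if $\mathrm{supp}\,M$ has a minimal element with respect to the way-below relation; (ii) $M$ is not upper semi-continuous if $\mathrm{supp}\,M$ has a maximal element with respect to the way-below relation. In particular, (iii) a nonzero finitely generated persistence module is not lower semi-continuous, and (iv) a nonzero finitely co-generated persistence module is not upper semi-continuous.
   Context: Let $P$ be a poset (as a category, $p\to q$ iff $p\le q$). A subset is directed if nonempty and any two elements have an upper bound in it. $x\ll y$ means: for every directed $D$ whose supremum exists with $y\le\sup D$, some $d\in D$ satisfies $x\le d$. $P$ is continuous if for each $p$ the set $\{x:x\ll p\}$ is directed with supremum $p$. An element $p$ is minimal (resp. maximal) in $S\subseteq P$ with respect to the way-below relation if $p\in S$ and $S\cap\{x:x\ll p\}\subseteq\{p\}$ (resp. $S\cap\{x:p\ll x\}\subseteq\{p\}$). $k$ is a commutative ring with unity; persistence modules are functors from $P$ to $k$-modules; $\mathrm{supp}\,M=\{p:M_p\ne0\}$. $k[U_x]$, $k[D_x]$ are indicator modules of $U_x=\{y\ge x\}$, $D_x=\{y\le x\}$ ($k$ on the set, $0$ elsewhere, identity maps inside). $M$ is finitely generated if there is an epimorphism onto $M$ from a finite direct sum of modules $k[U_x]$, and finitely co-generated if there is a monomorphism from $M$ into a finite direct sum of modules $k[D_x]$. $\underline M_p=\varprojlim_{x\gg p}M_x$, $\overline M_p=\varinjlim_{x\ll p}M_x$; $M$ is upper (resp. lower) semi-continuous if the canonical morphism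 $M\to\underline M$ (resp. $\overline M\to M$) is an isomorphism. *)

(* Defs.v *)
From HB Require Import structures.
From mathcomp Require Import all_boot all_order all_algebra.
Set Implicit Arguments. Unset Strict Implicit. Unset Printing Implicit Defensive.
Import Order.TTheory GRing.Theory.
Local Open Scope ring_scope.

Section Posets.
Context {d : Order.disp_t} {P : porderType d}.

Definition directed (D : P -> Prop) : Prop :=
  (exists x, D x) /\
  (forall a b, D a -> D b -> exists c, [/\ D c, (a <= c)%O & (b <= c)%O]).

Definition is_sup (D : P -> Prop) (s : P) : Prop :=
  (forall x, D x -> (x <= s)%O) /\
  (forall u, (forall x, D x -> (x <= u)%O) -> (s <= u)%O).

Definition way_below (x y : P) : Prop :=
  forall (D : P -> Prop) (s : P), directed D -> is_sup D s -> (y <= s)%O ->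
    exists2 e, D e & (x <= e)%O.

Definition continuous_poset : Prop :=
  forall p, directed (fun x => way_below x p) /\ is_sup (fun x => way_below x p) p.

Definition wb_minimal (S : P -> Prop) (p : P) : Prop :=
  S p /\ (forall x, S x -> way_below x p -> x = p).

Definition wb_maximal (S : P -> Prop) (p : P) : Prop :=
  S p /\ (forall x, S x -> way_below p x -> x = p).

Lemma way_below_le (x y : P) : way_below x y -> (x <= y)%O.
Proof.
move=> H; have [||e -> //] := H (fun z => z = y) y _ _ (lexx y).
- split; first by exists y.
  by move=> a b -> ->; exists y; split.
- by split=> [z -> //|u Hu]; apply: Hu.
Qed.

End Posets.

Section PMod.
Context {d : Order.disp_t} (P : porderType d) (R : comPzRingType).

Record pmod : Type := PMod {
  pobj : P -> lmodType R;
  pmap : forall p q : P, (p <= q)%O -> {linear pobj p -> pobj q};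
  pmap_id : forall (p : P) (h : (p <= p)%O) (v : pobj p), pmap h v = v;
  pmap_comp : forall (p q r : P) (h1 : (p <= q)%O) (h2 : (q <= r)%O)
      (h3 : (p <= r)%O) (v : pobj p), pmap h3 v = pmap h2 (pmap h1 v)
}.

Definition natural (M N : pmod) (eta : forall p, {linear pobj M p -> pobj N p}) : Prop :=
  forall (p q : P) (h : (p <= q)%O) (v : pobj M p),
    eta q (pmap M h v) = pmap N h (eta p v).

Definition supp (M : pmod) : P -> Prop := fun p => exists v : pobj M p, v != 0.

Definition nonzero_pmod (M : pmod) : Prop := exists p, supp M p.

(* Indicator module k[S] of a convex subset S of P: R on S, 0 elsewhere,
   identity maps inside S.  The value at p is the free module 'rV_(S p),
   i.e. R^1 if p \in S and R^0 = 0 otherwise; the structure maps are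
   right multiplication by the all-ones matrix. *)
Definition ind_obj (S : pred P) (p : P) : lmodType R := 'rV[R]_(S p).

Definition ind_map (S : pred P) (p q : P) (h : (p <= q)%O) :
  {linear ind_obj S p -> ind_obj S q} := mulmxr (const_mx 1).

Lemma ind_map_id (S : pred P) (p : P) (h : (p <= p)%O) (v : ind_obj S p) :
  ind_map S h v = v.
Proof.
rewrite /ind_map /ind_obj /= in v *.
case: (S p) v => v; last by rewrite [LHS]thinmx0 [RHS]thinmx0.
apply/rowP => j; rewrite !mxE big_ord1 mxE mulr1.
by rewrite (ord1 j); congr (v _ _); apply/val_inj; rewrite /= (ord1 j).
Qed.

Lemma const1_mul (a b c : bool) :
  b -> (const_mx 1 : 'M[R]_(a, b)) *m (const_mx 1 : 'M[R]_(b, c)) = const_mx 1.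
Proof.
case: b => // _; apply/matrixP => i j.
by rewrite !mxE big_ord1 !mxE mulr1.
Qed.

Lemma ind_map_comp (S : pred P)
  (conv : forall p q r : P, (p <= q)%O -> (q <= r)%O -> S p -> S r -> S q)
  (p q r : P) (h1 : (p <= q)%O) (h2 : (q <= r)%O) (h3 : (p <= r)%O)
  (v : ind_obj S p) : ind_map S h3 v = ind_map S h2 (ind_map S h1 v).
Proof.
rewrite /ind_map /ind_obj /= in v *. rewrite -mulmxA.
move: (conv p q r h1 h2) v.
case: (S q) => [_|]; first by move=> v; rewrite const1_mul.
case: (S p) => [|_ v]; last by rewrite [v]thinmx0 !mul0mx.
case: (S r) => [/(_ isT isT) //|_ v].
by rewrite [LHS]thinmx0 [RHS]thinmx0.
Qed.

Lemma up_conv (x : P) (p q r : P) : (p <= q)%O -> (q <= r)%O ->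
  (x <= p)%O -> (x <= r)%O -> (x <= q)%O.
Proof. by move=> pq _ xp _; apply: le_trans pq. Qed.

Lemma down_conv (x : P) (p q r : P) : (p <= q)%O -> (q <= r)%O ->
  (p <= x)%O -> (r <= x)%O -> (q <= x)%O.
Proof. by move=> _ qr _ rx; apply: le_trans rx. Qed.

Definition indU (x : P) : pmod :=
  @PMod (ind_obj (fun y => (x <= y)%O)) (@ind_map _)
    (@ind_map_id _) (@ind_map_comp _ (@up_conv x)).

Definition indD (x : P) : pmod :=
  @PMod (ind_obj (fun y => (y <= x)%O)) (@ind_map _)
    (@ind_map_id _) (@ind_map_comp _ (@down_conv x)).

(* M is finitely generated: an epimorphism  (+)_{i<n} k[U_{x_i}] -> M.
   A morphism out of the finite direct sum is a family of morphisms
   f_i : k[U_{x_i}] -> M, the induced map being (v_i)_i |-> \sum_i f_i v_i;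
   epimorphisms of persistence modules are the pointwise surjective ones. *)
Definition fin_gen (M : pmod) : Prop :=
  exists (n : nat) (xs : 'I_n -> P)
         (f : forall (i : 'I_n) (p : P), {linear pobj (indU (xs i)) p -> pobj M p}),
    (forall i, natural (f i)) /\
    (forall (p : P) (m : pobj M p),
        exists v : forall i : 'I_n, pobj (indU (xs i)) p,
          m = \sum_(i < n) f i p (v i)).

(* M is finitely co-generated: a monomorphism M -> (+)_{i<n} k[D_{x_i}].
   A morphism into the finite direct sum (= product) is a family
   g_i : M -> k[D_{x_i}]; monomorphisms are the pointwise injective ones. *)
Definition fin_cogen (M : pmod) : Prop :=
  exists (n : nat) (xs : 'I_n -> P)
         (g : forall (i : 'I_n) (p : P), {linear pobj M p -> pobj (indD (xs i)) p}),
    (forall i, natural (g i)) /\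
    (forall (p : P) (m : pobj M p), (forall i, g i p m = 0) -> m = 0).

(* Upper semi-continuity: for every p, the canonical morphism
   M_p -> lim_{x >> p} M_x is an isomorphism, i.e. the cone
   (M_p, M(p <= x))_{x >> p} is a limit cone of the diagram
   {x | p << x} -> R-Mod (full subposet). *)
Definition upper_sc (M : pmod) : Prop :=
  forall (p : P) (N : lmodType R)
         (f : forall x : P, way_below p x -> {linear N -> pobj M x}),
    (forall (x y : P) (hx : way_below p x) (hy : way_below p y) (hxy : (x <= y)%O)
            (v : N), pmap M hxy (f x hx v) = f y hy v) ->
    exists g : {linear N -> pobj M p},
      (forall (x : P) (hx : way_below p x) (v : N),
          pmap M (way_below_le hx) (g v) = f x hx v) /\
      (forall g' : {linear N -> pobj M p},
          (forall (x : P) (hx : way_below p x) (v : N),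
              pmap M (way_below_le hx) (g' v) = f x hx v) ->
          forall v, g' v = g v).

(* Lower semi-continuity: for every p, the canonical morphism
   colim_{x << p} M_x -> M_p is an isomorphism, i.e. the cocone
   (M_p, M(x <= p))_{x << p} is a colimit cocone. *)
Definition lower_sc (M : pmod) : Prop :=
  forall (p : P) (N : lmodType R)
         (f : forall x : P, way_below x p -> {linear pobj M x -> N}),
    (forall (x y : P) (hx : way_below x p) (hy : way_below y p) (hxy : (x <= y)%O)
            (v : pobj M x), f y hy (pmap M hxy v) = f x hx v) ->
    exists g : {linear pobj M p -> N},
      (forall (x : P) (hx : way_below x p) (v : pobj M x),
          g (pmap M (way_below_le hx) v) = f x hx v) /\
      (forall g' : {linear pobj M p -> N},
          (forall (x : P) (hx : way_below x p) (v : pobj M x),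
              g' (pmap M (way_below_le hx) v) = f x hx v) ->
          forall v, g' v = g v).

End PMod.

(* Main.v *)
Require Import Defs.
From mathcomp Require Import all_boot all_order all_algebra.
From Stdlib Require Import ClassicalDescription.
Set Implicit Arguments. Unset Strict Implicit. Unset Printing Implicit Defensive.
Import Order.TTheory GRing.Theory.
Local Open Scope ring_scope.

Section Aux.
Context {d : Order.disp_t} (P : porderType d) (R : comPzRingType).

Lemma not_supp_zero (M : pmod P R) x : ~ supp M x -> forall v : pobj M x, v = 0.
Proof.
move=> H v; case: (eqVneq v 0) => // hv; exfalso; apply: H; by exists v.
Qed.

Lemma part_i (Hirr : forall p : P, ~ way_below p p) (M : pmod P R) p :
  wb_minimal (supp M) p -> ~ lower_sc M.
Proof.
move=> [[v0 hv0] hmin] Hlsc.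
have Z : forall x, way_below x p -> forall v : pobj M x, v = 0.
  move=> x hx v; apply: not_supp_zero => hs.
  by have e := hmin x hs hx; subst x; exact: Hirr hx.
have [g [_ hg]] := Hlsc p (pobj M p) (fun x _ => \0) (fun x y hx hy hxy v => erefl).
have e1 : idfun v0 = g v0 by apply: hg => x hx v; rewrite (Z x hx v) !linear0.
have e2 : (\0 : {linear _ -> _}) v0 = g v0 by apply: hg => x hx v; rewrite (Z x hx v) !linear0.
by move: hv0; rewrite -[v0]/(idfun v0) e1 -e2 eqxx.
Qed.

Lemma part_ii (Hirr : forall p : P, ~ way_below p p) (M : pmod P R) p :
  wb_maximal (supp M) p -> ~ upper_sc M.
Proof.
move=> [[v0 hv0] hmax] Husc.
have Z : forall x, way_below p x -> forall v : pobj M x, v = 0.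
  move=> x hx v; apply: not_supp_zero => hs.
  by have e := hmax x hs hx; subst x; exact: Hirr hx.
have [g [_ hg]] := Husc p (pobj M p) (fun x _ => \0) (fun x y hx hy hxy v => etrans (f_equal _ (erefl (\0 v : pobj M x))) (linear0 _)).
have e1 : idfun v0 = g v0 by apply: hg => x hx v; rewrite [LHS](Z x hx).
have e2 : (\0 : {linear _ -> _}) v0 = g v0 by apply: hg => x hx v; rewrite [LHS](Z x hx).
by move: hv0; rewrite -[v0]/(idfun v0) e1 -e2 eqxx.
Qed.

Lemma fin_min (I : finType) (s : pred I) (r : rel I) :
  (forall i, ~~ r i i) -> (forall i j k, r i j -> r j k -> r i k) ->
  (exists i, s i) -> exists j, s j /\ forall i, s i -> ~~ r i j.
Proof.
move=> irr tr [i0 si0].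
case: (arg_minnP (fun j => #|[pred k | s k && r k j]|) si0) => j sj hj.
exists j; split=> // i si; apply/negP => rij.
have := hj i si; apply/negP; rewrite -ltnNge; apply: proper_card.
apply/properP; split.
  by apply/subsetP => k; rewrite !inE => /andP[-> /tr]; apply.
by exists i; rewrite !inE ?si ?rij ?irr // andbF.
Qed.

Lemma rv_const (b : bool) (u : 'rV[R]_b) : u = (\sum_j u 0 j) *: const_mx 1.
Proof.
case: b u => u; last by rewrite [LHS]thinmx0 [RHS]thinmx0.
apply/rowP => j; rewrite !mxE big_ord1 mulr1 (ord1 j).
by congr (u _ _); apply/val_inj.
Qed.

Lemma sc_const0 (b : bool) (c : R) : b -> (c *: const_mx 1 : 'rV[R]_b) = 0 -> c = 0.
Proof.
case: b => // _ /rowP /(_ ord0); rewrite !mxE mulr1 => ->; done.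
Qed.


Lemma gen_supp (M : pmod P R) n (xs : 'I_n -> P)
  (f : forall (i : 'I_n) (p : P), {linear pobj (indU R (xs i)) p -> pobj M p})
  (nat : forall i, natural (f i))
  (surj : forall (p : P) (m : pobj M p),
        exists v : forall i : 'I_n, pobj (indU R (xs i)) p,
          m = \sum_(i < n) f i p (v i)) q :
  supp M q -> exists i, supp M (xs i) /\ (xs i <= q)%O.
Proof.
move=> [m hm]; have [v ev] := surj q m.
have [i hi] : exists i, f i q (v i) != 0.
  case: (boolP [exists i, f i q (v i) != 0]) => [/existsP//|].
  rewrite negb_exists => /forallP H; move: hm; rewrite ev big1 ?eqxx // => i _.
  by move: (H i); rewrite negbK => /eqP.
have hb : (xs i <= q)%O.
  case: (boolP (xs i <= q)%O) => // nb; exfalso; move: hi.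
  have: forall u : 'rV[R]_(xs i <= q)%O, u = 0 by rewrite (negbTE nb) => u; apply: thinmx0.
  by move=> /(_ (v i)) ->; rewrite linear0 eqxx.
exists i; split=> //.
exists (f i (xs i) (const_mx 1 : 'rV[R]_(xs i <= xs i)%O)).
apply: contraNneq hi => e0.
have N := nat i (xs i) q hb (const_mx 1).
rewrite e0 linear0 in N.
have C : Defs.pmap (indU R (xs i)) hb (const_mx 1 : 'rV[R]_(xs i <= xs i)%O) = const_mx 1.
  by rewrite /= /ind_map /=; exact: (const1_mul R true (xs i <= q)%O (lexx (xs i))).
by rewrite (rv_const (v i)) linearZ /= -C N scaler0.
Qed.

Lemma cogen_supp (M : pmod P R) n (xs : 'I_n -> P)
  (g : forall (i : 'I_n) (p : P), {linear pobj M p -> pobj (indD R (xs i)) p})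
  (nat : forall i, natural (g i))
  (inj : forall (p : P) (m : pobj M p), (forall i, g i p m = 0) -> m = 0) q :
  supp M q -> exists i, supp M (xs i) /\ (q <= xs i)%O.
Proof.
move=> [m hm].
have [i hi] : exists i, g i q m != 0.
  case: (boolP [exists i, g i q m != 0]) => [/existsP//|].
  rewrite negb_exists => /forallP H; move: hm; rewrite (inj _ m) ?eqxx // => i.
  by move: (H i); rewrite negbK => /eqP.
have hb : (q <= xs i)%O.
  case: (boolP (q <= xs i)%O) => // nb; exfalso; move: hi.
  have: forall u : 'rV[R]_(q <= xs i)%O, u = 0 by rewrite (negbTE nb) => u; apply: thinmx0.
  by move=> /(_ (g i q m)) ->; rewrite eqxx.
exists i; split=> //.
exists (Defs.pmap M hb m).
apply: contraNneq hi => e0.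
have N := nat i q (xs i) hb m.
rewrite e0 linear0 in N.
move: N; set u := g i q m; rewrite (rv_const u); set c := \sum_j u 0 j.
move=> N.
have c0 : c = 0.
  apply: (@sc_const0 (xs i <= xs i)%O) (lexx _) _.
  by move: N => /=; rewrite /ind_map /= -scalemxAl (const1_mul R true _ hb) => <-.
by rewrite c0 scale0r.
Qed.

End Aux.

Theorem mainTheorem16 (d : Order.disp_t) (P : porderType d) (R : comPzRingType)
  (HP : @continuous_poset d P) (Hirr : forall p : P, ~ way_below p p)
  (M : pmod P R) :
  ((exists p, wb_minimal (supp M) p) -> ~ lower_sc M) /\
  ((exists p, wb_maximal (supp M) p) -> ~ upper_sc M) /\
  (fin_gen M -> nonzero_pmod M -> ~ lower_sc M) /\
  (fin_cogen M -> nonzero_pmod M -> ~ upper_sc M).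
Proof.
pose s (Q : P -> Prop) := fun x => if excluded_middle_informative (Q x) then true else false.
have sP : forall Q x, s Q x <-> Q x by move=> Q x; rewrite /s; case: excluded_middle_informative.
split; [|split; [|split]].
- move=> [p hp] L; exact: (part_i Hirr hp L).
- move=> [p hp] L; exact: (part_ii Hirr hp L).
- case=> n [xs [f [nat surj]]] [q hq].
  have [i [si _]] := gen_supp nat surj hq.
  have [j [sj hj]] := @fin_min _ (fun i => s (supp M) (xs i)) (fun a b => (xs a < xs b)%O)
    (fun i => negbT (ltxx _)) (fun a b c => @lt_trans _ _ _ _ _) (ex_intro _ i ((sP _ _).2 si)).
  apply: (part_i Hirr (p := xs j)); split; first exact/sP.
  move=> x hx wb; have [k [sk le]] := gen_supp nat surj hx.
  have lexj := way_below_le wb.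
  have : (xs k <= xs j)%O := le_trans le lexj.
  rewrite le_eqVlt => /orP[/eqP e|lt]; last by have := hj k ((sP _ _).2 sk); rewrite lt.
  by apply/le_anti; rewrite lexj /= -e le.
- case=> n [xs [g [nat inj]]] [q hq].
  have [i [si _]] := cogen_supp nat inj hq.
  have [j [sj hj]] := @fin_min _ (fun i => s (supp M) (xs i)) (fun a b => (xs b < xs a)%O)
    (fun i => negbT (ltxx _)) (fun a b c h1 h2 => lt_trans h2 h1) (ex_intro _ i ((sP _ _).2 si)).
  apply: (part_ii Hirr (p := xs j)); split; first exact/sP.
  move=> x hx wb; have [k [sk le]] := cogen_supp nat inj hx.
  have lexj := way_below_le wb.
  have : (xs j <= xs k)%O := le_trans lexj le.
  rewrite le_eqVlt => /orP[/eqP e|lt]; last by have := hj k ((sP _ _).2 sk); rewrite lt.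
  by apply/le_anti; rewrite lexj andbT e.
Qed.
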